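(* Let $w$ be an nTL-monomial for $P_n$ and let $x_i$ be a letter occurring in $w$. If $i$ is the $j$-th smallest among the distinct indices occurring in $w$, then $x_i$ occurs at most $j$ times in $w$; likewise, if $i$ is the $j$-th largest among the distinct indices occurring in $w$, then $x_i$ occurs at most $j$ times in $w$.
   Context: The nil-Temperley-Lieb algebra $A_n$ of the path graph $P_n$ is the unital associative algebra generated by $x_1,\dots,x_n$ subject to the relations $x_i^2=0$; $x_ix_j=x_jx_i$ if $|i-j|>1$; $x_ix_{i+1}x_i=0$ and $x_{i+1}x_ix_{i+1}=0$ for $1\le i<n$. Two words are equivalent if one can be obtained from the other by repeatedly swapping adjacent letters $x_ix_j\to x_jx_i$ with $|i-j|>1$. A word is reducible if it equals $0$ in $A_n$. An nTL-monomial is a word that is not reducible and lexicographically smallest (by index sequence) among all words equivalent to it. *)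

(* Defs.v *)
From mathcomp Require Import all_boot.
Set Implicit Arguments. Unset Strict Implicit. Unset Printing Implicit Defensive.

(* Words in x_1..x_n are represented by their index sequences (seq nat). *)

Definition word_on (n : nat) (w : seq nat) : bool :=
  all (fun i => (1 <= i <= n)%N) w.

Definition far (i j : nat) : bool := ((i.+1 < j) || (j.+1 < i))%N.

Inductive comm_step : seq nat -> seq nat -> Prop :=
| CommStep u v i j : far i j -> comm_step (u ++ [:: i; j] ++ v) (u ++ [:: j; i] ++ v).

(* equivalence of words: reflexive-transitive closure of commutations
   (comm_step is symmetric, so this is an equivalence relation) *)
Inductive word_equiv : seq nat -> seq nat -> Prop :=
| WE_refl w : word_equiv w w
| WE_step w1 w2 w3 : comm_step w1 w2 -> word_equiv w2 w3 -> word_equiv w1 w3.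

Definition zero_relator (r : seq nat) : Prop :=
  (exists i, r = [:: i; i]) \/
  (exists i, r = [:: i; i.+1; i]) \/
  (exists i, r = [:: i.+1; i; i.+1]).

(* All defining relations of A_n are monomial
   (w = 0) or binomial commutations (w = w'), so A_n is the contracted
   semigroup algebra of the monoid-with-zero with the same presentation and
   a word is 0 in A_n iff it is congruent to 0 in that monoid, i.e. iff it is
   obtained by commutations from a word containing a zero relator as a factor. *)
Definition reducible (w : seq nat) : Prop :=
  exists u r v, zero_relator r /\ word_equiv w (u ++ r ++ v).

Fixpoint lex_le (s t : seq nat) : bool :=
  match s, t with
  | [::], _ => true
  | _ :: _, [::] => false
  | a :: s', b :: t' => (a < b)%N || ((a == b) && lex_le s' t')
  end.

Definition nTL_monomial (n : nat) (w : seq nat) : Prop :=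
  word_on n w /\ ~ reducible w /\
  (forall w', word_equiv w w' -> lex_le w w').

Definition idx_support (w : seq nat) : seq nat := sort leq (undup w).

(* Main.v *)
Require Import Defs.
From mathcomp Require Import all_boot.
From mathcomp Require Import zify.

Lemma we_trans a b c : word_equiv a b -> word_equiv b c -> word_equiv a c.
Proof. elim=> // x y z H _ IH /IH; exact: WE_step. Qed.

Arguments we_trans {a} b {c}.
Lemma we_ctx p q a b : word_equiv a b -> word_equiv (p ++ a ++ q) (p ++ b ++ q).
Proof.
elim=> [w|w1 w2 w3 [u v x y Hf] _ IH]; first by constructor.
apply: WE_step IH.
have := CommStep (p ++ u) (v ++ q) Hf.
by rewrite -!catA.
Qed.

Arguments we_ctx p q {a b}.
Lemma far_sym x y : far x y = far y x.
Proof. by rewrite /far orbC. Qed.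

Lemma move_right x g : all (far x) g -> word_equiv (x :: g) (g ++ [:: x]).
Proof.
elim: g => [|y g IH] /=; first by constructor.
move=> /andP [Hf Ha].
apply: (WE_step (w2 := y :: x :: g)); first exact: (CommStep [::] g Hf).
have := we_ctx [:: y] [::] (IH Ha). by rewrite /= !cats0.
Qed.

Lemma move_left x g : all (far x) g -> word_equiv (g ++ [:: x]) (x :: g).
Proof.
elim: g => [|y g IH] /=; first by constructor.
move=> /andP [Hf Ha].
apply: (we_trans (y :: x :: g)).
  have := we_ctx [:: y] [::] (IH Ha). by rewrite /= !cats0.
apply: WE_step (WE_refl _). rewrite far_sym in Hf. exact: (CommStep [::] g Hf).
Qed.

Arguments move_right {x g}.
Arguments move_left {x g}.
Lemma red_equiv w w' : word_equiv w w' -> reducible w' -> reducible w.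
Proof. move=> H [u [r [v [Hr H']]]]. exists u, r, v. split=> //. exact: we_trans _ H H'. Qed.

Lemma red_shape a g1 r g2 b i :
  all (far i) g1 -> all (far i) g2 -> zero_relator (i :: r ++ [:: i]) ->
  reducible (a ++ i :: g1 ++ r ++ g2 ++ i :: b).
Proof.
move=> H1 H2 Hr.
apply: (@red_equiv _ (a ++ g1 ++ (i :: r ++ [:: i]) ++ g2 ++ b)); last first.
  exists (a ++ g1), (i :: r ++ [:: i]), (g2 ++ b); split => //; rewrite -!catA; constructor.
apply: (we_trans (a ++ (g1 ++ [:: i]) ++ r ++ g2 ++ i :: b)).
  have HH := we_ctx a (r ++ g2 ++ i :: b) (move_right H1); exact HH.
have := we_ctx (a ++ g1 ++ i :: r) b (move_left H2).
by rewrite -!catA /= -!catA.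
Qed.

Lemma split_first (k : nat) g : k \in g -> exists g1 g2, g = g1 ++ k :: g2 /\ k \notin g1.
Proof.
elim: g => // x g IH; rewrite in_cons; case: eqP => [->|Hx] /= H.
  by exists [::], g.
have [g1 [g2 [-> Hn]]] := IH H. exists (x :: g1), g2; split => //.
by rewrite in_cons negb_or Hn andbT; apply/eqP => E; apply: Hx.
Qed.


Lemma far_of i x : x != i -> x != i.+1 -> x.+1 != i -> far i x.
Proof. rewrite /far; lia. Qed.

Lemma gap_up n : forall a g b i, size g <= n -> i \notin g ->
  ~ reducible (a ++ i :: g ++ i :: b) -> i.+1 \in g.
Proof.
elim: n => [|n IH] a g b i Hs Hi Hred.
  case: g Hs Hi Hred => // _ _ Hred; exfalso; apply: Hred.
  have := @red_shape a [::] [::] [::] b i isT isT (or_introl (ex_intro _ i erefl)).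
  by [].
case Hu: (i.+1 \in g) => //; exfalso.
case Hh: (has (fun k => k.+1 == i) g).
  have [k /andP [Hk /eqP Ek]] : exists k, (k \in g) && (k.+1 == i).
    by move/hasP: Hh => [k Hk Ek]; exists k; rewrite Hk Ek.
  subst i.
  have [g1 [g2 [Eg Hk1]]] := split_first _ _ Hk.
  case Hk2: (k \in g2).
    have [g3 [g4 [Eg2 Hk3]]] := split_first _ _ Hk2.
    have Hsz : size g3 <= n.
      move: Hs; rewrite Eg Eg2 !size_cat /= size_cat /=; lia.
    have Hred' : ~ reducible ((a ++ k.+1 :: g1) ++ k :: g3 ++ k :: (g4 ++ k.+1 :: b)).
      by rewrite Eg Eg2 in Hred; rewrite -!catA /=; move: Hred; rewrite /= -!catA /= -catA.
    have := IH _ _ _ _ Hsz Hk3 Hred'.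
    by move: Hi; rewrite Eg Eg2 !mem_cat !in_cons mem_cat => /negP Hi Hg3; apply: Hi; rewrite Hg3 !orbT.
  apply: Hred; rewrite Eg.
  have := @red_shape a g1 [:: k] g2 b k.+1.
  rewrite /= -catA /= => H; apply: H.
  - apply/allP => x Hx. apply: far_of.
    + by apply: contraNneq Hi => <-; rewrite Eg mem_cat Hx.
    + by apply: contraFneq Hu => <-; rewrite Eg mem_cat Hx.
    + by apply: contraNneq Hk1 => /eqP; rewrite eqSS => /eqP <-.
  - apply/allP => x Hx. apply: far_of.
    + by apply: contraNneq Hi => <-; rewrite Eg mem_cat in_cons Hx !orbT.
    + by apply: contraFneq Hu => <-; rewrite Eg mem_cat in_cons Hx !orbT.
    + by apply: contraFneq Hk2 => /eqP; rewrite eqSS => /eqP <-.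
  - by right; right; exists k.
apply: Hred; have := @red_shape a g [::] [::] b i; rewrite /= => H; apply: H => //.
  apply/allP => x Hx. apply: far_of.
  + by apply: contraNneq Hi => <-.
  + by apply: contraFneq Hu => <-.
  + by apply: contraFneq Hh => E; apply/hasP; exists x => //; apply/eqP.
by left; exists i.
Qed.


Lemma gap_down n : forall a g b i, size g <= n -> i \notin g ->
  ~ reducible (a ++ i :: g ++ i :: b) -> has (fun k => k.+1 == i) g.
Proof.
elim: n => [|n IH] a g b i Hs Hi Hred.
  case: g Hs Hi Hred => // _ _ Hred; exfalso; apply: Hred.
  have := @red_shape a [::] [::] [::] b i isT isT (or_introl (ex_intro _ i erefl)).
  by [].
case Hh: (has (fun k => k.+1 == i) g) => //; exfalso.
case Hu: (i.+1 \in g).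
  have [g1 [g2 [Eg Hk1]]] := split_first _ _ Hu.
  case Hk2: (i.+1 \in g2).
    have [g3 [g4 [Eg2 Hk3]]] := split_first _ _ Hk2.
    have Hsz : size g3 <= n.
      move: Hs; rewrite Eg Eg2 !size_cat /= size_cat /=; lia.
    have Hred' : ~ reducible ((a ++ i :: g1) ++ i.+1 :: g3 ++ i.+1 :: (g4 ++ i :: b)).
      by rewrite Eg Eg2 in Hred; rewrite -!catA /=; move: Hred; rewrite /= -!catA /= -catA.
    move/hasP: (IH _ _ _ _ Hsz Hk3 Hred') => [x Hx /eqP [Ex]]; subst x.
    by move: Hi; rewrite Eg Eg2 !mem_cat !in_cons mem_cat Hx !orbT.
  apply: Hred; rewrite Eg.
  have := @red_shape a g1 [:: i.+1] g2 b i.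
  rewrite /= -catA /= => H; apply: H.
  - apply/allP => x Hx. apply: far_of.
    + by apply: contraNneq Hi => <-; rewrite Eg mem_cat Hx.
    + by apply: contraNneq Hk1 => <-.
    + by apply: contraFneq Hh => E; apply/hasP; exists x; rewrite ?Eg ?mem_cat ?Hx ?E //.
  - apply/allP => x Hx. apply: far_of.
    + by apply: contraNneq Hi => <-; rewrite Eg mem_cat in_cons Hx !orbT.
    + by apply: contraFneq Hk2 => <-.
    + by apply: contraFneq Hh => E; apply/hasP; exists x; rewrite ?Eg ?mem_cat ?in_cons ?Hx ?E ?orbT //.
  - by right; left; exists i.
apply: Hred; have := @red_shape a g [::] [::] b i; rewrite /= => H; apply: H => //.
  apply/allP => x Hx. apply: far_of.
  + by apply: contraNneq Hi => <-.
  + by apply: contraFneq Hu => <-.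
  + by apply: contraFneq Hh => E; apply/hasP; exists x => //; apply/eqP.
by left; exists i.
Qed.


Lemma count_gap (p : pred nat) i s : ~~ p i ->
  (forall a g b, s = a ++ i :: g ++ i :: b -> i \notin g -> has p g) ->
  count_mem i s <= count p s + 1.
Proof.
move=> Hpi; have [n] := ubnP (size s); elim: n s => // n IH [|x s] //= Hsz Hyp.
have Hyp' : forall a g b, s = a ++ i :: g ++ i :: b -> i \notin g -> has p g.
  by move=> a g b E; apply: (Hyp (x :: a)); rewrite E.
case: (eqVneq x i) => [Ex|Hx].
  subst x. case Hs: (i \in s); last first.
    by move/negbT/count_memPn: Hs => ->; simpl; lia.
  have [g [b [Eg Hg]]] := split_first _ _ Hs.
  have Hhas : has p g by apply: (Hyp [::] g b) => //; rewrite Eg.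
  have Hyp2 : forall a g' b', i :: b = a ++ i :: g' ++ i :: b' -> i \notin g' -> has p g'.
    by move=> a g' b' E; apply: (Hyp (i :: g ++ a)); rewrite Eg E /= -catA.
  have := IH (i :: b) _ Hyp2.
  rewrite Eg !count_cat /= (negbTE Hpi) eqxx.
  move/count_memPn: Hg => ->; rewrite has_count in Hhas.
  move: Hsz; rewrite Eg size_cat /= => Hsz H; have := H ltac:(lia). lia.
have := IH s ltac:(lia) Hyp'. case: (p x) => /=; lia.
Qed.

Lemma cnt_le_split k u : count (fun x => x <= k.+1) u = count (fun x => x <= k) u + count_mem k.+1 u.
Proof. elim: u => //= x u ->. case: (ltngtP x k.+1) => H; lia. Qed.

Lemma cnt_ge_split k u : count (fun x => k <= x) u = count (fun x => k.+1 <= x) u + count_mem k u.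
Proof. elim: u => //= x u ->. case: (ltngtP k x) => H; lia. Qed.


Lemma cnt_pos (P : pred nat) i w : i \in w -> P i -> 0 < count P (undup w).
Proof. move=> Hi HP; rewrite -has_count; apply/hasP; exists i => //; by rewrite mem_undup. Qed.

Lemma rank_lo w : ~ reducible w -> forall m i, i \in w ->
  count (fun x => x <= i) (undup w) <= m ->
  count_mem i w <= count (fun x => x <= i) (undup w).
Proof.
move=> Hred; elim=> [|m IH] i Hi Hm.
  by have := cnt_pos (fun x => x <= i) i w Hi (leqnn i); lia.
have Hc := @count_gap (fun k => k.+1 == i) i w.
have {Hc} Hc : count_mem i w <= count (fun k => k.+1 == i) w + 1.
  apply: Hc; first by rewrite /= eqn_leq ltnn.
  move=> a g b E Hg; apply: (gap_down (size g) a g b i) => //.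
  by rewrite -E.
have Hpos := cnt_pos (fun x => x <= i) i w Hi (leqnn i).
case: i Hi Hm Hc Hpos => [|k] Hi Hm Hc Hpos.
  have : count (fun k : nat => k.+1 == 0) w = 0 by elim: (w) => //.
  lia.
have E1 : count (fun k0 => k0.+1 == k.+1) w = count_mem k w by apply: eq_count => y /=; rewrite eqSS.
rewrite E1 in Hc.
case Hk: (k \in w); last first.
  by move/negbT/count_memPn: Hk => Hk; lia.
have E2 := cnt_le_split k (undup w).
rewrite count_uniq_mem ?undup_uniq // mem_undup Hi in E2.
have := IH k Hk ltac:(lia). lia.
Qed.

Lemma rank_hi w : ~ reducible w -> forall m i, i \in w ->
  count (fun x => i <= x) (undup w) <= m ->
  count_mem i w <= count (fun x => i <= x) (undup w).
Proof.
move=> Hred; elim=> [|m IH] i Hi Hm.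
  by have := cnt_pos (fun x => i <= x) i w Hi (leqnn i); lia.
have Hc := @count_gap (pred1 i.+1) i w.
have {Hc} Hc : count_mem i w <= count (pred1 i.+1) w + 1.
  apply: Hc; first by rewrite /= eqn_leq ltnn andbF.
  move=> a g b E Hg; rewrite has_pred1; apply: (gap_up (size g) a g b i) => //.
  by rewrite -E.
have Hpos := cnt_pos (fun x => i <= x) i w Hi (leqnn i).
case Hk: (i.+1 \in w); last first.
  by move/negbT/count_memPn: Hk => Hk; lia.
have E2 := cnt_ge_split i (undup w).
rewrite count_uniq_mem ?undup_uniq // mem_undup Hi in E2.
have := IH i.+1 Hk ltac:(lia). lia.
Qed.


Lemma cnt_sorted_lo s n : sorted ltn s -> n < size s ->
  count (fun x => x <= nth 0 s n) s = n.+1.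
Proof.
elim: s n => // x s IH n /= Hp.
have Hall := order_path_min ltn_trans Hp.
have Hs := path_sorted Hp.
case: n => [|n] /= Hn.
  rewrite leqnn; congr S; apply/eqP; rewrite -leqn0 leqNgt -has_count; apply/hasP => [[y Hy]].
  by move/allP: Hall => /(_ y Hy); lia.
rewrite IH //. have : x < nth 0 s n by move/allP: Hall; apply; apply: mem_nth.
move=> H; rewrite (ltnW H); lia.
Qed.

Lemma cnt_sorted_hi s n : sorted ltn s -> n < size s ->
  count (fun x => nth 0 s n <= x) s = size s - n.
Proof.
elim: s n => // x s IH n /= Hp.
have Hall := order_path_min ltn_trans Hp.
have Hs := path_sorted Hp.
case: n => [|n] /= Hn.
  rewrite leqnn subn0; congr S; apply/eqP; rewrite -all_count; apply/allP => y Hy.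
  by move/allP: Hall => /(_ y Hy); lia.
rewrite IH //. have : x < nth 0 s n by move/allP: Hall; apply; apply: mem_nth.
move=> H; rewrite leqNgt H /=; lia.
Qed.

Theorem lemma7p1 (n : nat) (w : seq nat) (i j : nat) :
  nTL_monomial n w -> i \in w -> (1 <= j)%N ->
  (nth 0 (idx_support w) j.-1 = i -> (count_mem i w <= j)%N) /\
  (nth 0 (rev (idx_support w)) j.-1 = i -> (count_mem i w <= j)%N).
Proof.
move=> [_ [Hred _]] Hi Hj.
set u := undup w; set s := idx_support w.
have Hperm : perm_eq s u by rewrite /s /idx_support perm_sort.
have Hsort : sorted ltn s.
  by rewrite ltn_sorted_uniq_leq sort_uniq undup_uniq sort_sorted //; exact: leq_total.
have Hsz : size s = size u by apply: perm_size.
have Hlo := rank_lo w Hred _ i Hi (leqnn _).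
have Hhi := rank_hi w Hred _ i Hi (leqnn _).
have Hcs : forall P, count P u <= size s by move=> P; rewrite Hsz count_size.
split => Hnth.
  rewrite -(permP Hperm) in Hlo.
  case: (ltnP j.-1 (size s)) => Hjs.
    by rewrite -Hnth cnt_sorted_lo // in Hlo; rewrite -Hnth; lia.
  have := count_size (fun x => x <= i) s => H; apply: leq_trans Hlo _; apply: leq_trans H _; lia.
rewrite -(permP Hperm) in Hhi.
case: (ltnP j.-1 (size s)) => Hjs.
  rewrite nth_rev // in Hnth.
  rewrite -Hnth cnt_sorted_hi // in Hhi; last by lia.
  rewrite -Hnth; lia.
have := count_size (fun x => i <= x) s => H; apply: leq_trans Hhi _; apply: leq_trans H _; lia.
Qed.
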